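(* Let $n\ge0$ and $k,m\ge1$ be integers, and let $r_0<r_1<\dots<r_{k-1}$ and $s_0<s_1<\dots<s_{k-1}$ be integers in $\{1,\dots,k+m\}$. Let $\bar r_0<\dots<\bar r_{m-1}$ and $\bar s_0<\dots<\bar s_{m-1}$ be the elements of $\{1,\dots,k+m\}\setminus\{r_0,\dots,r_{k-1}\}$ and $\{1,\dots,k+m\}\setminus\{s_0,\dots,s_{k-1}\}$ respectively. Then $$\det\Big(C_{2n}^{(2k+2m-1)}(2r_i-2\to2s_j-2)\Big)_{0\le i,j\le k-1}=(-1)^{\sum_{i=0}^{m-1}(\bar r_i+\bar s_i)}\det\Big(C_{-2n}^{(2k+2m-1)}(2\bar r_i-2\to2\bar s_j-2)\Big)_{0\le i,j\le m-1}.$$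
   Context: For $N\ge0$ and $0\le r,s\le K$, $C_N^{(K)}(r\to s)$ is the number of lattice paths with steps $(1,1),(1,-1)$ from $(0,r)$ to $(N,s)$ never below the $x$-axis nor above $y=K$. For odd $K$, $F(x)=\sum_{N\ge0}C_N^{(K)}(r\to s)x^N$ is a rational function $p/q$ with $\deg p<\deg q$, $q(0)\ne0$, and for negative $N$ one defines $C_N^{(K)}(r\to s)$ by $\sum_{N\ge1}C_{-N}^{(K)}(r\to s)x^N=-F(1/x)$ (equivalently by running the linear recurrence backwards). *)

(* Defs.v *)
From HB Require Import structures.
From mathcomp Require Import all_boot all_order all_algebra.
Set Implicit Arguments. Unset Strict Implicit. Unset Printing Implicit Defensive.
Import Order.TTheory GRing.Theory Num.Theory.
Local Open Scope ring_scope.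

(* Lattice paths with steps (1,1),(1,-1) from (0,r) to (N,s) staying in
   0 <= y <= K: the sequence of heights y_0, ..., y_N, each in 'I_K.+1,
   with consecutive heights differing by exactly 1. *)
Definition lattice_paths (K N r s : nat) : {set (N.+1).-tuple 'I_K.+1} :=
  [set t : (N.+1).-tuple 'I_K.+1 |
     [&& nth 0%N (map val t) 0 == r,
         nth 0%N (map val t) N == s &
         sorted (fun a b : 'I_K.+1 =>
                   ((val a).+1 == val b) || ((val b).+1 == val a)) t]].

Definition Cpos (K N r s : nat) : nat := #|lattice_paths K N r s|.

(* coefficient i of the reversal x^d p(1/x) of p (zero beyond d) *)
Definition revc (p : {poly rat}) (d i : nat) : rat :=
  if (i <= d)%N then p`_(d - i) else 0.

(* [neg_ext K r s D] : D N = C_{-N}^{(K)}(r -> s) for N >= 1, i.e.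
   sum_{N>=1} D N x^N = -F(1/x), where F = p/q is the generating function
   sum_{N>=0} C_N x^N with deg p < deg q and q(0) <> 0.  With d = deg q,
   -F(1/x) = -P(x)/Q(x) where Q = x^d q(1/x), P = x^d p(1/x), Q(0) <> 0;
   the identity is stated coefficientwise as Q * G = -P, G = sum_{N>=1} D N x^N. *)
Definition neg_ext (K r s : nat) (D : nat -> rat) : Prop :=
  exists p q : {poly rat},
    [/\ q`_0 != 0, (size p < size q)%N,
        (forall N : nat,
            \sum_(i < N.+1) q`_i * (Cpos K (N - i) r s)%:R = p`_N) &
        (forall N : nat,
            \sum_(i < N.+1) revc q (size q).-1 i *
                 (if (N - i)%N is 0 then 0 else D (N - i)%N)
            = - revc p (size q).-1 N)].

(* The two-sided sequence C_N^{(K)}(r -> s), N : int, given the values D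
   for negative indices (D N stands for C_{-N}). *)
Definition Cz (K : nat) (D : nat -> nat -> nat -> rat) (N : int) (r s : nat)
  : rat :=
  match N with
  | Posz n => (Cpos K n r s)%:R
  | Negz n => D r s n.+1
  end.

(* Main.v *)
Require Import Defs.
From HB Require Import structures.
From mathcomp Require Import all_boot all_order all_algebra.
From mathcomp Require Import perm zify.
Import Order.TTheory GRing.Theory Num.Theory.
Local Open Scope ring_scope.

Definition adjn (a b : nat) : bool := (a.+1 == b) || (b.+1 == a).
Definition Amx (K : nat) : 'M[rat]_K.+1 := \matrix_(i, j) (adjn i j)%:R.

Lemma card_sumR (T : finType) (P : pred T) :
  (#|[set x | P x]|)%:R = \sum_x (P x)%:R :> rat.
Proof.
rewrite -sum1_card natr_sum big_mkcond /=; apply eq_bigr => x _.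
by rewrite inE; case: (P x).
Qed.

Lemma sum_tupleS (T : finType) n (F : n.+2.-tuple T -> rat) :
  \sum_t F t = \sum_x \sum_(t : n.+1.-tuple T) F (cons_tuple x t).
Proof.
rewrite pair_big /=.
apply: (reindex (fun u : T * n.+1.-tuple T => cons_tuple u.1 u.2)).
exists (fun t => (thead t, behead_tuple t)).
- by move=> [x t] _ /=; congr pair; apply: val_inj.
- move=> t _; case: t / tupleP => x t /=; by apply: val_inj.
Qed.

Lemma sum_tuple1 (T : finType) (F : 1.-tuple T -> rat) :
  \sum_t F t = \sum_x F [tuple x].
Proof.
apply: (reindex (fun x : T => [tuple x])).
exists (fun t => thead t).
- by move=> x _.
- move=> t _; case: t / tupleP => x t /=; rewrite tuple0; by apply: val_inj.
Qed.

Definition adjrel K := fun a b : 'I_K.+1 => ((val a).+1 == val b) || ((val b).+1 == val a).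

Definition Pp K N (x y : nat) (t : N.+1.-tuple 'I_K.+1) : bool :=
  [&& nth 0%N (map val t) 0 == x, nth 0%N (map val t) N == y &
         sorted (fun a b : 'I_K.+1 =>
                   ((val a).+1 == val b) || ((val b).+1 == val a)) t].

Lemma Cpos_sum K N x y : (Cpos K N x y)%:R = \sum_t (Pp K N x y t)%:R :> rat.
Proof. by rewrite /Cpos /lattice_paths card_sumR. Qed.

Lemma nth_head K n (t : n.+1.-tuple 'I_K.+1) : nth 0%N (map val t) 0 = val (thead t).
Proof. by case: t / tupleP. Qed.

Lemma Pp_head K N (w : 'I_K.+1) y t :
  Pp K N w y t = (thead t == w) && Pp K N (thead t) y t.
Proof.
rewrite /Pp nth_head eqxx /=.
by case: (thead t == w) / eqP => [->|]; [rewrite eqxx | move=> h; rewrite (_ : (val (thead t) == val w) = false) //; apply/eqP => /val_inj].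
Qed.

Lemma Pp_cons K N x y z (t : N.+1.-tuple 'I_K.+1) :
  Pp K N.+1 x y (cons_tuple z t) =
  [&& val z == x, adjn z (thead t) & Pp K N (thead t) y t].
Proof.
case: t / tupleP => w t.
rewrite /Pp /= eqxx /=.
by rewrite /adjn /=; case: (_ == x) => //=; case: (_ || _); rewrite ?andbF.
Qed.

Lemma Cpos_A K N (x y : 'I_K.+1) : (Cpos K N x y)%:R = (Amx K ^+ N) x y.
Proof.
elim: N x => [|N IH] x.
  rewrite Cpos_sum sum_tuple1 expr0 mxE.
  rewrite (bigD1 x) //= big1 => [|z hz].
    rewrite /Pp /= eqxx /= addr0.
    by case: (x == y) / eqP => [->|h]; [rewrite eqxx|
      rewrite (_ : (val x == val y) = false) //; apply/eqP => /val_inj].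
  rewrite /Pp /=; case: (val z == val x) / eqP => // h.
  by rewrite (val_inj h) eqxx in hz.
rewrite Cpos_sum sum_tupleS exprS mxE.
transitivity (\sum_(t : N.+1.-tuple 'I_K.+1) (Amx K x (thead t) * (Pp K N (thead t) y t)%:R)).
  rewrite exchange_big /=; apply: eq_bigr => t _.
  rewrite (bigD1 x) //= big1 => [|z hz].
    by rewrite Pp_cons eqxx /= addr0 mxE; case: adjn; case: Pp; rewrite ?mulr1 ?mulr0.
  rewrite Pp_cons; case: (val z == val x) / eqP => //= h.
  by rewrite (val_inj h) eqxx in hz.
under [RHS]eq_bigr => w _ do rewrite -IH Cpos_sum mulr_sumr.
rewrite exchange_big /=; apply: eq_bigr => t _.
rewrite (bigD1 (thead t)) //= big1 => [|w hw].
  by rewrite addr0.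
by rewrite Pp_head eq_sym (negbTE hw) mulr0.
Qed.


Lemma sum_nat2 L (G : nat -> rat) :
  \sum_(i < 2 * L) G i = \sum_(c < L) G (2 * c)%N + \sum_(c < L) G (2 * c + 1)%N.
Proof.
elim: L => [|L IH]; first by rewrite !big_ord0 addr0.
rewrite (_ : (2 * L.+1 = (2 * L).+2)%N); last by lia.
rewrite !big_ord_recr /= IH.
rewrite (_ : ((2 * L).+1 = 2 * L + 1)%N); last by lia.
by rewrite -!addrA; congr (_ + _); rewrite addrC -!addrA; congr (_ + _); rewrite addrC.
Qed.

Lemma sum_split2 K L (hKL : K.+1 = (2 * L)%N) (F : 'I_K.+1 -> rat) :
  \sum_z F z = \sum_(c < L) F (inord (2 * c)) + \sum_(c < L) F (inord (2 * c + 1)).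
Proof.
rewrite (eq_bigr (fun z : 'I_K.+1 => F (inord (val z)))); last by move=> z _; rewrite inord_val.
have h : forall n (G : nat -> rat), n = (2 * L)%N ->
  \sum_(i < n) G i = \sum_(c < L) G (2 * c)%N + \sum_(c < L) G (2 * c + 1)%N.
  by move=> n G ->; exact: sum_nat2.
exact: (h K.+1 (fun n => F (inord n))).
Qed.

Definition Bmx L : 'M[rat]_L := \matrix_(i, j) (adjn (2 * i) (2 * j + 1))%:R.
Definition Mmx L := Bmx L *m (Bmx L)^T.
Definition Mp L := (Bmx L)^T *m Bmx L.
Definition IL K L (E O : 'M[rat]_L.+1) : 'M[rat]_K.+1 :=
  \matrix_(x, y) if (x %% 2 == y %% 2)%N then
     (if (x %% 2 == 1)%N then O (inord (x %/ 2)) (inord (y %/ 2))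
      else E (inord (x %/ 2)) (inord (y %/ 2))) else 0.

Arguments IL {K L}.

Lemma det_Bmx L : \det (Bmx L) = 1.
Proof.
rewrite det_trig.
  by rewrite big1 // => i _; rewrite mxE /adjn (_ : ((2 * i).+1 == 2 * i + 1)%N) //; apply/eqP; lia.
apply/is_trig_mxP => i j hij; rewrite mxE.
rewrite (_ : adjn _ _ = false) //; apply/negbTE/norP; split; apply/eqP; lia.
Qed.

Lemma det_Mmx L : \det (Mmx L) = 1.
Proof. by rewrite det_mulmx det_tr det_Bmx mulr1. Qed.
Lemma det_Mp L : \det (Mp L) = 1.
Proof. by rewrite det_mulmx det_tr det_Bmx mulr1. Qed.
Lemma Mmx_sym L : (Mmx L)^T = Mmx L.
Proof. by rewrite /Mmx trmx_mul trmxK. Qed.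

Section IL.
Variables (K L : nat) (hKL : K.+1 = (2 * L.+1)%N).

Lemma inord2 (c : 'I_L.+1) : nat_of_ord (inord (2 * c) : 'I_K.+1) = (2 * c)%N.
Proof. by rewrite inordK //; have := ltn_ord c; lia. Qed.
Lemma inord21 (c : 'I_L.+1) : nat_of_ord (inord (2 * c + 1) : 'I_K.+1) = (2 * c + 1)%N.
Proof. by rewrite inordK //; have := ltn_ord c; lia. Qed.

Lemma inordL (c : 'I_L.+1) : (inord ((2 * c) %/ 2) : 'I_L.+1) = c.
Proof. by rewrite (_ : ((2 * c) %/ 2 = c)%N) ?inord_val //; lia. Qed.
Lemma inordL1 (c : 'I_L.+1) : (inord ((2 * c + 1) %/ 2) : 'I_L.+1) = c.
Proof. by rewrite (_ : ((2 * c + 1) %/ 2 = c)%N) ?inord_val //; lia. Qed.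

Lemma IL_ev_r E O (x : 'I_K.+1) (c : 'I_L.+1) :
  IL E O x (inord (2 * c)) = if (x %% 2 == 0)%N then E (inord (x %/ 2)) c else 0.
Proof.
rewrite mxE inord2 inordL (_ : ((2 * c) %% 2 = 0)%N); last by lia.
have : (x %% 2 = 0 \/ x %% 2 = 1)%N by lia.
by case=> ->.
Qed.
Lemma IL_ev_l E O (y : 'I_K.+1) (c : 'I_L.+1) :
  IL E O (inord (2 * c)) y = if (y %% 2 == 0)%N then E c (inord (y %/ 2)) else 0.
Proof.
rewrite mxE inord2 inordL (_ : ((2 * c) %% 2 = 0)%N); last by lia.
have : (y %% 2 = 0 \/ y %% 2 = 1)%N by lia.
by case=> ->.
Qed.
Lemma IL_od_r E O (x : 'I_K.+1) (c : 'I_L.+1) :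
  IL E O x (inord (2 * c + 1)) = if (x %% 2 == 1)%N then O (inord (x %/ 2)) c else 0.
Proof.
rewrite mxE inord21 inordL1 (_ : ((2 * c + 1) %% 2 = 1)%N); last by lia.
have : (x %% 2 = 0 \/ x %% 2 = 1)%N by lia.
by case=> ->.
Qed.
Lemma IL_od_l E O (y : 'I_K.+1) (c : 'I_L.+1) :
  IL E O (inord (2 * c + 1)) y = if (y %% 2 == 1)%N then O c (inord (y %/ 2)) else 0.
Proof.
rewrite mxE inord21 inordL1 (_ : ((2 * c + 1) %% 2 = 1)%N); last by lia.
have : (y %% 2 = 0 \/ y %% 2 = 1)%N by lia.
by case=> ->.
Qed.

Lemma IL_mul (E O E' O' : 'M[rat]_L.+1) : @IL K L E O *m @IL K L E' O' = @IL K L (E *m E') (O *m O').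
Proof.
apply/matrixP => x y; rewrite !mxE (@sum_split2 K L.+1 hKL).
under eq_bigr => c _ do rewrite IL_ev_r IL_ev_l.
under [X in _ + X]eq_bigr => c _ do rewrite IL_od_r IL_od_l.
have : (x %% 2 = 0 \/ x %% 2 = 1)%N by lia.
have : (y %% 2 = 0 \/ y %% 2 = 1)%N by lia.
case=> -> [] ->/=.
- by rewrite [X in _ + X]big1 ?addr0 // => c _; rewrite mulr0.
- by rewrite !big1 ?addr0 // => c _; rewrite ?mulr0 ?mul0r.
- by rewrite !big1 ?addr0 // => c _; rewrite ?mulr0 ?mul0r.
- by rewrite big1 ?add0r // => c _; rewrite ?mulr0 ?mul0r.
Qed.

Lemma IL1 : @IL K L 1%:M 1%:M = 1%:M.
Proof.
apply/matrixP => x y; rewrite !mxE.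
have : (x %% 2 = 0 \/ x %% 2 = 1)%N by lia.
have : (y %% 2 = 0 \/ y %% 2 = 1)%N by lia.
have hx := ltn_ord x; have hy := ltn_ord y.
have hx2 : (x %/ 2 < L.+1)%N by lia.
have hy2 : (y %/ 2 < L.+1)%N by lia.
have key : (x %% 2 = y %% 2)%N -> (inord (x %/ 2) == inord (y %/ 2) :> 'I_L.+1) = (x == y).
  move=> hp; apply/eqP/eqP => [e|->//]; apply: val_inj => /=.
  by move/(congr1 val): e; rewrite /= !inordK //; lia.
case=> hy' [] hx'; rewrite hx' hy' /= ?mxE.
- by rewrite key //; lia.
- by rewrite (_ : (x == y) = false) //; apply/negbTE/negP => /eqP e; rewrite e in hx'; lia.
- by rewrite (_ : (x == y) = false) //; apply/negbTE/negP => /eqP e; rewrite e in hx'; lia.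
- by rewrite key //; lia.
Qed.

Lemma IL_exp (E O : 'M[rat]_L.+1) n : (@IL K L E O) ^+ n = @IL K L (E ^+ n) (O ^+ n).
Proof.
elim: n => [|n IH]; first by rewrite !expr0; symmetry; exact: IL1.
by rewrite !exprS IH; exact: IL_mul.
Qed.

Lemma adjn_par a b : (a %% 2 = b %% 2)%N -> adjn a b = false.
Proof. move=> h; apply/negbTE/norP; split; apply/eqP; lia. Qed.

Lemma adjnC a b : adjn a b = adjn b a.
Proof. by rewrite /adjn orbC. Qed.

Ltac kill := rewrite ?mxE ?inord2 ?inord21;
  first [ rewrite [adjn (nat_of_ord _) _]adjn_par ?mul0r //; lia
        | rewrite [adjn _ (nat_of_ord _)]adjn_par ?mulr0 //; lia ].

Lemma A2_IL : Amx K *m Amx K = @IL K L (Mmx L.+1) (Mp L.+1).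
Proof.
apply/matrixP => x y; rewrite /Amx !mxE (@sum_split2 K L.+1 hKL).
have hx := ltn_ord x; have hy := ltn_ord y.
have hx2 : (x %/ 2 < L.+1)%N by lia.
have hy2 : (y %/ 2 < L.+1)%N by lia.
have : (x %% 2 = 0 \/ x %% 2 = 1)%N by lia.
have : (y %% 2 = 0 \/ y %% 2 = 1)%N by lia.
case=> hy' [] hx'; rewrite hx' hy' /= ?mxE.
- rewrite big1 ?add0r => [|c _]; last by kill.
  apply: eq_bigr => c _; rewrite ?mxE inord21 !inordK //.
  rewrite (_ : (2 * (x %/ 2) = x)%N); last by lia.
  rewrite (_ : (2 * (y %/ 2) = y)%N); last by lia.
  by rewrite (adjnC _ y).
- by rewrite !big1 ?addr0 // => c _; kill.
- by rewrite !big1 ?addr0 // => c _; kill.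
- rewrite [X in _ + X]big1 ?addr0 => [|c _]; last by kill.
  apply: eq_bigr => c _; rewrite ?mxE inord2 !inordK //.
  rewrite (_ : (2 * (x %/ 2) + 1 = x)%N); last by lia.
  rewrite (_ : (2 * (y %/ 2) + 1 = y)%N); last by lia.
  by rewrite (adjnC x).
Qed.

End IL.


Lemma sum_trunc n m (F : nat -> rat) : (m <= n)%N ->
  (forall i, (m <= i)%N -> (i < n)%N -> F i = 0) ->
  \sum_(i < n) F i = \sum_(i < m) F i.
Proof.
move=> hmn hF; rewrite (big_ord_widen n F hmn) [RHS]big_mkcond /=.
apply: eq_bigr => i _; case: ifP => // /negbT; rewrite -leqNgt => h.
by rewrite hF.
Qed.

Section Neg.
Variables (K : nat) (hAu : Amx K \in unitmx).
Local Notation A := (Amx K).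
Local Notation Y := (invmx (Amx K)).

Lemma AY : A * Y = 1. Proof. exact: mulmxV hAu. Qed.
Lemma YA : Y * A = 1. Proof. exact: mulVmx hAu. Qed.

Lemma AnYn N : A ^+ N * Y ^+ N = 1.
Proof.
elim: N => [|N IH]; first by rewrite !expr0 mulr1.
by rewrite exprSr exprS -mulrA (mulrA A Y) AY mul1r IH.
Qed.
Lemma AiY i j : A ^+ i * Y ^+ (i + j) = Y ^+ j.
Proof. by rewrite exprD mulrA AnYn mul1r. Qed.
Lemma AYi i j : A ^+ (j + i) * Y ^+ i = A ^+ j.
Proof. by rewrite exprD -mulrA AnYn mulr1. Qed.

Lemma Y_horner : exists g, Y = horner_mx A g.
Proof.
set chi := char_poly A.
have hCH : horner_mx A chi = 0 := Cayley_Hamilton A.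
have ht : take_poly 1 chi = (chi`_0)%:P.
  apply/polyP => i; rewrite coef_take_poly coefC.
  by case: i.
have hd : horner_mx A (drop_poly 1 chi) * A = - (chi`_0)%:M.
  move: hCH; rewrite -{1}(poly_take_drop 1 chi) ht rmorphD rmorphM /= horner_mx_C.
  rewrite expr1 horner_mx_X => /eqP; rewrite addr_eq0 => /eqP ->.
  by rewrite opprK.
have hc0 : chi`_0 != 0.
  rewrite /chi char_poly_det mulf_eq0 negb_or signr_eq0 /=.
  by rewrite -unitfE -unitmxE.
exists (- (chi`_0)^-1 *: drop_poly 1 chi).
rewrite linearZ /=.
have h1 : (- (chi`_0)^-1 *: horner_mx A (drop_poly 1 chi)) * A = 1.
  by rewrite -scalerAl hd scaleNr scalerN opprK scale_scalar_mx mulVf.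
by rewrite -[LHS]mul1r -h1 -mulrA AY mulr1.
Qed.

Lemma uniq_conv (c E1 E2 r : nat -> rat) : c 0%N != 0 -> E1 0%N = 0 -> E2 0%N = 0 ->
  (forall N, \sum_(i < N.+1) c i * E1 (N - i)%N = r N) ->
  (forall N, \sum_(i < N.+1) c i * E2 (N - i)%N = r N) -> forall N, E1 N = E2 N.
Proof.
move=> hc h10 h20 h1 h2 N; elim/ltn_ind: N => N IH.
case: N IH => [_|N IH]; first by rewrite h10 h20.
have := h1 N.+1; rewrite -(h2 N.+1) big_ord_recl [X in _ = X]big_ord_recl subn0.
rewrite (eq_bigr (fun i : 'I_N.+1 => c (lift ord0 i) * E2 (N.+1 - lift ord0 i)%N)).
  by move/addIr/(mulfI hc).
by move=> i _; rewrite IH // lift0 subSS; have := ltn_ord i; lia.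
Qed.

Lemma D_eq (x y : 'I_K.+1) (Dxy : nat -> rat) : neg_ext K x y Dxy ->
  forall N, (0 < N)%N -> Dxy N = (Y ^+ N) x y.
Proof.
case=> p [q [hq0 hsz hC hD]].
set d := (size q).-1.
have hqn : q != 0 by apply: contraNneq hq0 => ->; rewrite coef0.
have hsq : size q = d.+1 by rewrite /d prednK // lt0n size_poly_eq0.
have hqd : q`_d != 0 by rewrite /d -lead_coefE lead_coef_eq0.
have hq_big : forall i, (d < i)%N -> q`_i = 0.
  by move=> i hi; rewrite nth_default // hsq.
have hp_big : forall i, (d <= i)%N -> p`_i = 0.
  by move=> i hi; rewrite nth_default //; move: hsz; rewrite hsq ltnS => h; exact: leq_trans h hi.
have hC' : forall N, \sum_(i < N.+1) q`_i * (A ^+ (N - i)) x y = p`_N.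
  by move=> N; rewrite -hC; apply: eq_bigr => i _; rewrite Cpos_A.
pose Qc : nat -> rat := fun i => revc q d i.
have hQc : forall i, (i <= d)%N -> Qc i = q`_(d - i).
  by move=> i hi; rewrite /Qc /revc hi.
have hQc0 : forall i, (d < i)%N -> Qc i = 0.
  by move=> i hi; rewrite /Qc /revc leqNgt hi.
pose Z := \sum_(i < d.+1) Qc i *: A ^+ i.
have hZ : forall t, (Z * A ^+ t) x y = 0.
  move=> t; rewrite mulr_suml summxE.
  transitivity (\sum_(i < (d + t).+1) q`_i * (A ^+ (d + t - i)) x y); last first.
    by rewrite hC' hp_big // leq_addr.
  rewrite [RHS](@sum_trunc _ d.+1 (fun n => q`_n * (A ^+ (d + t - n)) x y)); last first.
  - by move=> i hi _; rewrite hq_big ?mul0r.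
  - by rewrite ltnS leq_addr.
  rewrite (reindex_inj rev_ord_inj) /=.
  apply: eq_bigr => i _.
  have hi := ltn_ord i.
  rewrite -scalerAl -exprD mxE hQc; last by lia.
  by congr (q`_ _ * (A ^+ _) x y); lia.
have hb : forall h t, (Z * horner_mx A h * A ^+ t) x y = 0.
  move=> h; elim/poly_ind: h => [|h c IH] t.
    by rewrite rmorph0 mulr0 mul0r mxE.
  rewrite rmorphD rmorphM /= horner_mx_X horner_mx_C mulrDr mulrDl mxE.
  rewrite mulrA -(mulrA _ A) -exprS IH add0r.
  by rewrite -[Z * _]/(Z *m _) mul_mx_scalar -scalerAl mxE hZ mulr0.
have hY : forall L, (Z * Y ^+ L) x y = 0.
  move=> L; have [g ->] := Y_horner.
  by rewrite -rmorphXn; have := hb (g ^+ L) 0%N; rewrite expr0 mulr1.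
pose G : nat -> rat := fun n => match n with 0 => 0 | _.+1 => (Y ^+ n) x y end.
have hG : forall N, \sum_(i < N.+1) Qc i * G (N - i)%N = - revc p d N.
  move=> N.
  have eH : forall i, (A ^+ i * Y ^+ N) x y =
      if (i <= N)%N then (Y ^+ (N - i)) x y else (A ^+ (i - N)) x y.
    move=> i; case: ifP => hi; first by rewrite -{1}(subnKC hi) AiY.
    have hi' : (N <= i)%N by move/negbT: hi; rewrite -ltnNge; apply: ltnW.
    by rewrite -{1}(subnK hi') AYi.
  set R := (N + d.+1)%N.
  have e1 : \sum_(i < R) Qc i * (if (i <= N)%N then (Y ^+ (N - i)) x y else (A ^+ (i - N)) x y) = 0.
    rewrite (@sum_trunc _ d.+1 (fun i => Qc i * (if (i <= N)%N then (Y ^+ (N - i)) x y else (A ^+ (i - N)) x y))); last first.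
    - by move=> i hi _; rewrite hQc0 ?mul0r.
    - by rewrite /R leq_addl.
    rewrite -[RHS](hY N) mulr_suml summxE; apply: eq_bigr => i _.
    by rewrite -scalerAl mxE eH.
  rewrite (bigID (fun i : 'I_R => (i < N)%N)) /= in e1.
  have eL : \sum_(i < N.+1) Qc i * G (N - i)%N =
      \sum_(i < R | (i < N)%N) Qc i * (if (i <= N)%N then (Y ^+ (N - i)) x y else (A ^+ (i - N)) x y).
    rewrite big_ord_recr /= subnn mulr0 addr0.
    rewrite -(big_ord_widen R (fun i => Qc i * (if (i <= N)%N then (Y ^+ (N - i)) x y else (A ^+ (i - N)) x y))); last by rewrite /R leq_addr.
    apply: eq_bigr => i _.
    have hi := ltn_ord i.
    rewrite ifT; last by lia.
    rewrite /G; case E: (N - i)%N => [|k] //; lia.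
  have eR : \sum_(i < R | ~~ (i < N)%N) Qc i * (if (i <= N)%N then (Y ^+ (N - i)) x y else (A ^+ (i - N)) x y) = revc p d N.
    rewrite (eq_bigr (fun i : 'I_R => Qc i * (A ^+ (i - N)) x y)) => [|i hi]; last first.
      rewrite -leqNgt in hi; case: ifP => // hle.
      have hiN : nat_of_ord i = N by apply/eqP; rewrite eqn_leq hle hi.
      by rewrite hiN subnn !expr0.
    rewrite (eq_bigl (fun i : 'I_R => xpredT i && (N <= i)%N)) => [|i]; last by rewrite /= -leqNgt.
    rewrite -(big_geq_mkord N R xpredT (fun i => Qc i * (A ^+ (i - N)) x y)).
    rewrite -{1}(add0n N) big_addn (_ : (R - N = d.+1)%N); last by rewrite /R; lia.
    rewrite big_mkord.
    case: (leqP N d) => hNd; last first.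
      rewrite /revc leqNgt hNd big1 // => i _; rewrite hQc0 ?mul0r //.
      by rewrite (leq_trans hNd) // leq_addl.
    rewrite /revc hNd -hC' [RHS](reindex_inj rev_ord_inj) /=.
    transitivity (\sum_(i < d.+1) Qc (i + N)%N * (A ^+ (i + N - N)) x y); first by [].
    rewrite (@sum_trunc d.+1 (d - N).+1 (fun i => Qc (i + N)%N * (A ^+ (i + N - N)) x y)); last first.
    - move=> i hi _; rewrite hQc0 ?mul0r //.
      lia.
    - by rewrite ltnS leq_subr.
    apply: eq_bigr => i _.
    have hi := ltn_ord i.
    rewrite hQc; last by lia.
    by congr (q`_ _ * (A ^+ _) x y); lia.
  rewrite eL; apply/eqP; rewrite -addr_eq0 -eR; apply/eqP; exact: e1.
have hE := @uniq_conv Qc (fun n => match n with 0 => 0 | _.+1 => Dxy n end) G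
  (fun N => - revc p d N).
have hc : Qc 0%N != 0 by rewrite hQc // subn0.
move=> N hN; have := hE hc (erefl _) (erefl _) hD hG N.
by case: N hN.
Qed.
End Neg.

Local Close Scope ring_scope.

Lemma inc_ge n (g : 'I_n -> nat) :
  (forall i j : 'I_n, (i < j)%N -> (g i < g j)%N) ->
  forall i j : 'I_n, (i <= j)%N -> (g i + (j - i) <= g j)%N.
Proof.
move=> hg i j hij.
suff H : forall d (j : 'I_n), (i + d)%N = j -> (g i + d <= g j)%N.
  by apply: H; lia.
elim => [|d IH] j' e.
  by rewrite addn0 (_ : i = j') //; apply: val_inj; rewrite /= -e addn0.
have hj : (j'.-1 < n)%N by have := ltn_ord j'; lia.
have := IH (Ordinal hj) (ltac:(rewrite /=; lia)).
have := hg (Ordinal hj) j' (ltac:(rewrite /=; lia)).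
lia.
Qed.

Section Shuffle.
Variables (k m : nat).
Definition incl (s : 'S_(k + m)) :=
  forall i j : 'I_k, (i < j)%N -> (s (lshift m i) < s (lshift m j))%N.
Definition incr (s : 'S_(k + m)) :=
  forall i j : 'I_m, (i < j)%N -> (s (rshift k i) < s (rshift k j))%N.

Lemma incl_ge s : incl s -> forall i : 'I_k, (i <= s (lshift m i))%N.
Proof.
move=> hl i.
have h0 : (0 < k)%N by have := ltn_ord i; lia.
have := @inc_ge k (fun j => nat_of_ord (s (lshift m j))) hl (Ordinal h0) i (leq0n _).
rewrite /=; lia.
Qed.

Lemma base_case s : incl s -> incr s -> (forall i : 'I_k, nat_of_ord (s (lshift m i)) = i) ->
  s = 1%g.
Proof.
move=> hl hr hfix.
have hge : forall r : 'I_m, (k <= s (rshift k r))%N.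
  move=> r; rewrite leqNgt; apply/negP => hlt.
  have := hfix (Ordinal hlt) => e.
  have e' : s (lshift m (Ordinal hlt)) = s (rshift k r) by apply: val_inj; rewrite /= e.
  move/perm_inj: e' => /(congr1 val) /=; have := ltn_ord (Ordinal hlt); lia.
have hval : forall r : 'I_m, nat_of_ord (s (rshift k r)) = (k + r)%N.
  move=> r.
  have hm0 : (0 < m)%N by have := ltn_ord r; lia.
  have hm1 : (m.-1 < m)%N by lia.
  have h1 := @inc_ge m (fun j => nat_of_ord (s (rshift k j))) hr (Ordinal hm0) r (leq0n _).
  have h2 := @inc_ge m (fun j => nat_of_ord (s (rshift k j))) hr r (Ordinal hm1) (ltac:(rewrite /=; have := ltn_ord r; lia)).
  have h3 := hge (Ordinal hm0).
  have h4 := ltn_ord (s (rshift k (Ordinal hm1))).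
  move: h1 h2 h3 h4 => /= h1 h2 h3 h4.
  have := ltn_ord r; lia.
apply/permP => x; rewrite perm1; case: (splitP x) => [j hj|r hr2].
  have -> : x = lshift m j by apply: val_inj.
  by apply: val_inj; rewrite /= hfix.
have -> : x = rshift k r by apply: val_inj.
by apply: val_inj; rewrite /= hval.
Qed.


Lemma shuffle_odd s : incl s -> incr s ->
  odd_perm s = odd (\sum_(i < k) (s (lshift m i) - i))%N.
Proof.
suff H : forall d s, incl s -> incr s ->
    (\sum_(i < k) (s (lshift m i) - i))%N = d -> odd_perm s = odd d.
  by move=> hl hr; exact: H.
elim/ltn_ind => d IH {}s hl hr hd.
case: (boolP [forall i : 'I_k, nat_of_ord (s (lshift m i)) == i]) => [/forallP hall|].
  have hfix : forall i, nat_of_ord (s (lshift m i)) = i by move=> i; apply/eqP.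
  rewrite -hd big1 => [|i _]; last by rewrite hfix subnn.
  by rewrite (@base_case s hl hr hfix) odd_perm1.
move=> /forallPn [i0 hi0].
case: (arg_minnP (P := fun i : 'I_k => ~~ (nat_of_ord (s (lshift m i)) == i))
         (fun i : 'I_k => nat_of_ord i) hi0) => i hi hmin.
have hmin' : forall j : 'I_k, (j < i)%N -> nat_of_ord (s (lshift m j)) = j.
  move=> j hj; apply/eqP; apply: contraTT hj => hne; rewrite -leqNgt; exact: hmin.
set v := s (lshift m i).
have hvi : (i < v)%N.
  have := @incl_ge s hl i; rewrite -/v => h1.
  by rewrite ltn_neqAle eq_sym hi h1.
have hu : (v.-1 < k + m)%N by have := ltn_ord v; lia.
set u : 'I_(k + m) := Ordinal hu.
have huv : u != v by apply/eqP => /(congr1 val) /=; lia.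
have hnu : forall j : 'I_k, s (lshift m j) != u.
  move=> j; apply/eqP => /(congr1 val) /= e.
  case: (ltngtP j i) => hji.
  - have := hmin' j hji; lia.
  - have := hl i j hji; rewrite -/v; lia.
  - have ej : j = i by apply: val_inj.
    by move: e; rewrite ej -/v; lia.
set t := tperm u v.
set s' := (s * t)%g.
have hs' : forall x, s' x = t (s x) by move=> x; rewrite permM.
have hsi : s' (lshift m i) = u by rewrite hs' -/v tpermR.
have hsj : forall j : 'I_k, j != i -> s' (lshift m j) = s (lshift m j).
  move=> j hj; rewrite hs' tpermD //; first by rewrite eq_sym hnu.
  apply/eqP => /perm_inj /(congr1 val) /= e; move/eqP: hj; apply; exact: val_inj.
have hrv : forall r : 'I_m, nat_of_ord (s (rshift k r)) <> nat_of_ord v.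
  move=> r e; have e' : s (rshift k r) = s (lshift m i) by apply: val_inj.
  move/perm_inj/(congr1 val): e' => /=; have := ltn_ord i; lia.
have hsr : forall r : 'I_m, nat_of_ord (s' (rshift k r)) =
    if s (rshift k r) == u then nat_of_ord v else nat_of_ord (s (rshift k r)).
  move=> r; rewrite hs'; case: eqP => [->|hne]; first by rewrite tpermL.
  rewrite tpermD //; first by rewrite eq_sym; apply/eqP.
  by apply/eqP => e; apply: (hrv r); rewrite e.
have hd' : (\sum_(j < k) (s' (lshift m j) - j) + 1 = d)%N.
  rewrite -hd (bigD1 i) //= [X in _ = X](bigD1 i) //=.
  rewrite (eq_bigr (fun j : 'I_k => s (lshift m j) - j)%N) => [|j hj]; last by rewrite hsj.
  rewrite hsi /= -/v; lia.
have hl' : incl s'.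
  move=> a b hab.
  case: (eqVneq a i) => [ea|na]; case: (eqVneq b i) => [eb|nb].
  - by move: hab; rewrite ea eb ltnn.
  - rewrite ea hsi hsj //= -/v.
    have := hl i b (ltac:(by rewrite -ea)); rewrite -/v; lia.
  - rewrite eb hsi hsj //=.
    have := hmin' a (ltac:(by rewrite -eb)); have := hab; rewrite eb; lia.
  - by rewrite !hsj //; exact: hl.
have hr' : incr s'.
  move=> a b hab; rewrite !hsr.
  have := hr a b hab.
  case: eqP => ea; case: eqP => eb.
  - have e : s (rshift k a) = s (rshift k b) by rewrite ea eb.
    move/perm_inj/(congr1 val): e => /=; lia.
  - rewrite ea /= => h; have := hrv b; lia.
  - rewrite eb /= => h; lia.
  - by [].
have hlt : (\sum_(j < k) (s' (lshift m j) - j) < d)%N by lia.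
have E := IH _ hlt s' hl' hr' (erefl _).
rewrite /s' odd_permM odd_tperm huv in E.
rewrite -hd' oddD -E /=.
by case: (odd_perm s).
Qed.

End Shuffle.
Arguments incl {k m} s.
Arguments incr {k m} s.
Arguments shuffle_odd {k m s}.
Arguments incl_ge {k m s}.

Lemma odd_eq a b c : (a + b = 2 * c)%N -> odd a = odd b.
Proof.
move=> h; have := congr1 odd h; rewrite oddD oddM andFb.
by case: (odd a); case: (odd b).
Qed.

Lemma sum_sub_ge k m (s : 'S_(k + m)) : incl s ->
  (\sum_(i < k) (s (lshift m i) - i) + \sum_(i < k) (i : nat) =
   \sum_(i < k) s (lshift m i))%N.
Proof.
move=> hl; rewrite -big_split /=; apply: eq_bigr => i _.
by rewrite subnK // (incl_ge hl i).
Qed.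

Lemma sum_perm_all k m (s : 'S_(k + m)) :
  (\sum_(i < k) s (lshift m i) + \sum_(j < m) s (rshift k j) =
   \sum_(x : 'I_(k + m)) (x : nat))%N.
Proof.
rewrite [RHS](reindex_inj (@perm_inj _ s)) /=.
by rewrite [RHS]big_split_ord.
Qed.

Lemma sign_pair k m (s t : 'S_(k + m)) : incl s -> incl t -> incr s -> incr t ->
  odd_perm s (+) odd_perm t =
  odd (\sum_(j < m) (s (rshift k j) + t (rshift k j)))%N.
Proof.
move=> hls hlt hrs hrt.
rewrite (shuffle_odd hls hrs) (shuffle_odd hlt hrt) -oddD big_split /=.
have e1 := @sum_sub_ge k m s hls; have e2 := @sum_sub_ge k m t hlt.
have e3 := @sum_perm_all k m s; have e4 := @sum_perm_all k m t.
apply: (@odd_eq _ _ (\sum_(x : 'I_(k + m)) (x : nat) - \sum_(i < k) (i : nat))%N).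
move: e1 e2 e3 e4.
set S1 := \sum_(i < k) (s (lshift m i) - i)%N.
set S2 := \sum_(i < k) (t (lshift m i) - i)%N.
set I := \sum_(i < k) (i : nat).
set T := \sum_(x : 'I_(k + m)) (x : nat).
set Ps := \sum_(i < k) (s (lshift m i) : nat).
set Pt := \sum_(i < k) (t (lshift m i) : nat).
set Qs := \sum_(i < m) (s (rshift k i) : nat).
set Qt := \sum_(i < m) (t (rshift k i) : nat).
lia.
Qed.

Local Open Scope ring_scope.


Lemma jacobi (F : fieldType) k m (X Y : 'M[F]_(k + m)) (s t : 'S_(k + m)) :
  X *m Y = 1%:M ->
  \det (\matrix_(i, j) X (s (lshift m i)) (t (lshift m j))) =
  (-1) ^+ s * (-1) ^+ t * \det X *
  \det (\matrix_(i, j) Y (t (rshift k i)) (s (rshift k j))).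
Proof.
move=> hXY.
set Z := col_perm t (row_perm s X).
set W := row_perm t (col_perm s Y).
have hZ : Z = perm_mx s *m X *m perm_mx t^-1 by rewrite /Z col_permE row_permE.
have hW : W = perm_mx t *m Y *m perm_mx s^-1 by rewrite /W row_permE col_permE mulmxA.
have hZW : Z *m W = 1%:M.
  rewrite hZ hW !mulmxA -(mulmxA _ (perm_mx t^-1)) -perm_mxM mulVg perm_mx1 mulmx1.
  by rewrite -(mulmxA _ X) hXY mulmx1 -perm_mxM mulgV perm_mx1.
have detZ : \det Z = (-1) ^+ s * (-1) ^+ t * \det X.
  by rewrite hZ !det_mulmx !det_perm odd_permV mulrAC.
have e := hZW.
rewrite -(submxK Z) -(submxK W) mulmx_block (scalar_mx_block k m 1) in e.
case/eq_block_mx: e => e1 e2 e3 e4.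
have key : Z *m block_mx 1%:M (ursubmx W) 0 (drsubmx W) =
           block_mx (ulsubmx Z) 0 (dlsubmx Z) 1%:M.
  by rewrite -{1}(submxK Z) mulmx_block !mulmx1 !mulmx0 !addr0 e2 e4.
have hul : ulsubmx Z = \matrix_(i, j) X (s (lshift m i)) (t (lshift m j)).
  by apply/matrixP => i j; rewrite !mxE.
have hdr : drsubmx W = \matrix_(i, j) Y (t (rshift k i)) (s (rshift k j)).
  by apply/matrixP => i j; rewrite !mxE.
have := congr1 determinant key.
rewrite det_mulmx det_ublock det_lblock hul hdr detZ !det1 mulr1 mul1r => <-.
by [].
Qed.


Lemma trmxX n (A : 'M[rat]_n) e : (A ^+ e)^T = (A^T) ^+ e.
Proof.
elim: e => [|e IH]; first by rewrite !expr0 trmx1.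
by rewrite exprS [in RHS]exprSr -IH; exact: trmx_mul.
Qed.

Lemma detX n (A : 'M[rat]_n) e : \det (A ^+ e) = (\det A) ^+ e.
Proof.
elim: e => [|e IH]; first by rewrite !expr0 det1.
by rewrite !exprS -IH; exact: det_mulmx.
Qed.

Lemma mulXV n (A B : 'M[rat]_n) e : A *m B = 1%:M -> A ^+ e *m B ^+ e = 1%:M.
Proof.
move=> hAB; elim: e => [|e IH]; first by rewrite !expr0 mulmx1.
rewrite exprSr exprS.
by rewrite -mulmxA (mulmxA A B) hAB mul1mx IH.
Qed.

Section Part4.
Variables (K L : nat) (hKL : K.+1 = (2 * L.+1)%N).
Local Notation A := (Amx K).
Local Notation M := (Mmx L.+1).
Local Notation M' := (Mp L.+1).

Lemma M_unit : M \in unitmx.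
Proof. by rewrite unitmxE det_Mmx unitr1. Qed.
Lemma M'_unit : M' \in unitmx.
Proof. by rewrite unitmxE det_Mp unitr1. Qed.

Lemma AAW : A *m A *m @IL K L (invmx M) (invmx M') = 1%:M.
Proof.
rewrite (@A2_IL K L hKL) (@IL_mul K L hKL) (mulmxV M_unit) (mulmxV M'_unit).
exact: (@IL1 K L hKL).
Qed.

Lemma A_unit : A \in unitmx.
Proof.
have [h _] := mulmx1_unit AAW.
by move: h; rewrite unitmx_mul => /andP [].
Qed.

Lemma Y2 : invmx A *m invmx A = @IL K L (invmx M) (invmx M').
Proof.
rewrite -[LHS]mulmx1 -AAW !mulmxA -(mulmxA (invmx A) (invmx A) A) (mulVmx A_unit).
by rewrite mulmx1 (mulVmx A_unit) mul1mx.
Qed.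

Lemma IL_even (E O : 'M[rat]_L.+1) a b : (a < L.+1)%N -> (b < L.+1)%N ->
  @IL K L E O (inord (2 * a)) (inord (2 * b)) = E (inord a) (inord b).
Proof.
move=> ha hb.
have h1 : (2 * a < K.+1)%N by lia.
have h2 : (2 * b < K.+1)%N by lia.
have h3 : ((2 * a) %% 2 = 0)%N by lia.
have h4 : ((2 * b) %% 2 = 0)%N by lia.
have h5 : ((2 * a) %/ 2 = a)%N by lia.
have h6 : ((2 * b) %/ 2 = b)%N by lia.
by rewrite mxE (inordK h1) (inordK h2) h3 h4 h5 h6.
Qed.

Lemma Aeven n a b : (a < L.+1)%N -> (b < L.+1)%N ->
  (A ^+ (2 * n)) (inord (2 * a)) (inord (2 * b)) = (M ^+ n) (inord a) (inord b).
Proof.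
move=> ha hb.
rewrite exprM expr2 (_ : A * A = @IL K L M M'); last exact: (@A2_IL K L hKL).
by rewrite (@IL_exp K L hKL) IL_even.
Qed.

Lemma Yeven n a b : (a < L.+1)%N -> (b < L.+1)%N ->
  (invmx A ^+ (2 * n)) (inord (2 * a)) (inord (2 * b)) = (invmx M ^+ n) (inord a) (inord b).
Proof.
move=> ha hb.
rewrite exprM expr2 (_ : invmx A * invmx A = @IL K L (invmx M) (invmx M')); last exact: Y2.
by rewrite (@IL_exp K L hKL) IL_even.
Qed.

End Part4.


Lemma Cpos_nat K N a b : (a < K.+1)%N -> (b < K.+1)%N ->
  (Cpos K N a b)%:R = (Amx K ^+ N) (inord a) (inord b).
Proof. by move=> ha hb; rewrite -Cpos_A !inordK. Qed.

Lemma negCz K (hAu : Amx K \in unitmx) (D : nat -> nat -> nat -> rat)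
  (hD : forall a b, neg_ext K a b (D a b)) n a b :
  (a < K.+1)%N -> (b < K.+1)%N ->
  Cz K D (- (2 * n)%N%:Z) a b = (invmx (Amx K) ^+ (2 * n)) (inord a) (inord b).
Proof.
move=> ha hb.
case: n => [|n].
  rewrite (_ : - ((2 * 0)%N%:Z) = Posz 0) //.
  by rewrite /Cz Cpos_nat // !expr0.
have h2 : (0 < 2 * n.+1)%N by lia.
rewrite (_ : - ((2 * n.+1)%N%:Z) = Negz (2 * n.+1).-1); last by rewrite NegzE prednK.
rewrite /Cz prednK //.
have hD' : neg_ext K (inord a : 'I_K.+1) (inord b : 'I_K.+1) (D a b).
  by rewrite !inordK //; exact: hD.
exact: (@D_eq K hAu _ _ _ hD' _ h2).
Qed.

Lemma mk_shuffle k' m (r : 'I_k'.+1 -> nat) (rb : 'I_m -> nat) :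
  (forall i, (1 <= r i)%N /\ (r i - 1 < (k' + m).+1)%N) ->
  (forall j, (1 <= rb j)%N /\ (rb j - 1 < (k' + m).+1)%N) ->
  (forall i j : 'I_k'.+1, (i < j)%N -> (r i < r j)%N) ->
  (forall i j : 'I_m, (i < j)%N -> (rb i < rb j)%N) ->
  (forall (i : 'I_m) (j : 'I_k'.+1), rb i != r j) ->
  exists sg : 'S_(k'.+1 + m), [/\ incl sg, incr sg,
    forall i, nat_of_ord (sg (lshift m i)) = (r i - 1)%N &
    forall j, nat_of_ord (sg (rshift k'.+1 j)) = (rb j - 1)%N].
Proof.
move=> hr hrb hrinc hrbinc hrr.
pose fr (x : 'I_(k'.+1 + m)) : 'I_(k'.+1 + m) :=
  match split x with inl i => @inord (k' + m) (r i - 1) | inr j => @inord (k' + m) (rb j - 1) end.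
have frl : forall i, nat_of_ord (fr (lshift m i)) = (r i - 1)%N.
  move=> i; rewrite /fr (unsplitK (inl _ i)) inordK //; exact: (proj2 (hr i)).
have frr : forall j, nat_of_ord (fr (rshift k'.+1 j)) = (rb j - 1)%N.
  move=> j; rewrite /fr (unsplitK (inr _ j)) inordK //; exact: (proj2 (hrb j)).
have fr_inj : injective fr.
  move=> x y.
  case: (splitP x) => [i hx|j hx]; case: (splitP y) => [i' hy|j' hy].
  - have -> : x = lshift m i by apply: val_inj.
    have -> : y = lshift m i' by apply: val_inj.
    move/(congr1 (@nat_of_ord _)); rewrite !frl => e.
    have [h1 _] := hr i; have [h2 _] := hr i'.
    congr lshift; case: (ltngtP i i') => hii.
    + by have := hrinc _ _ hii; lia.
    + by have := hrinc _ _ hii; lia.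
    + exact: val_inj.
  - have -> : x = lshift m i by apply: val_inj.
    have -> : y = rshift k'.+1 j' by apply: val_inj.
    move/(congr1 (@nat_of_ord _)); rewrite frl frr => e.
    have [h1 _] := hr i; have [h2 _] := hrb j'.
    have : rb j' = r i by lia.
    by move/eqP; rewrite (negbTE (hrr j' i)).
  - have -> : x = rshift k'.+1 j by apply: val_inj.
    have -> : y = lshift m i' by apply: val_inj.
    move/(congr1 (@nat_of_ord _)); rewrite frl frr => e.
    have [h1 _] := hr i'; have [h2 _] := hrb j.
    have : rb j = r i' by lia.
    by move/eqP; rewrite (negbTE (hrr j i')).
  - have -> : x = rshift k'.+1 j by apply: val_inj.
    have -> : y = rshift k'.+1 j' by apply: val_inj.
    move/(congr1 (@nat_of_ord _)); rewrite !frr => e.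
    have [h1 _] := hrb j; have [h2 _] := hrb j'.
    congr rshift; case: (ltngtP j j') => hjj.
    + by have := hrbinc _ _ hjj; lia.
    + by have := hrbinc _ _ hjj; lia.
    + exact: val_inj.
exists (perm fr_inj); split.
- move=> i j hij; rewrite !permE !frl.
  have [h1 _] := hr i; have := hrinc _ _ hij; lia.
- move=> i j hij; rewrite !permE !frr.
  have [h1 _] := hrb i; have := hrbinc _ _ hij; lia.
- by move=> i; rewrite permE frl.
- by move=> j; rewrite permE frr.
Qed.

Lemma main_thm (n k' m : nat) (r s : 'I_k'.+1 -> nat) (rb sb : 'I_m -> nat)
  (D : nat -> nat -> nat -> rat) :
  (forall i : 'I_k'.+1, (1 <= r i <= k'.+1 + m)%N) ->
  (forall i : 'I_k'.+1, (1 <= s i <= k'.+1 + m)%N) ->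
  (forall i j : 'I_k'.+1, (i < j)%N -> (r i < r j)%N) ->
  (forall i j : 'I_k'.+1, (i < j)%N -> (s i < s j)%N) ->
  (forall i : 'I_m, (1 <= rb i <= k'.+1 + m)%N) ->
  (forall i : 'I_m, (1 <= sb i <= k'.+1 + m)%N) ->
  (forall i j : 'I_m, (i < j)%N -> (rb i < rb j)%N) ->
  (forall i j : 'I_m, (i < j)%N -> (sb i < sb j)%N) ->
  (forall (i : 'I_m) (j : 'I_k'.+1), rb i != r j) ->
  (forall (i : 'I_m) (j : 'I_k'.+1), sb i != s j) ->
  (forall a b : nat, neg_ext (2 * k'.+1 + 2 * m - 1) a b (D a b)) ->
  \det (\matrix_(i < k'.+1, j < k'.+1)
          Cz (2 * k'.+1 + 2 * m - 1) D (2 * n)%N%:Z (2 * r i - 2) (2 * s j - 2))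
  = (-1) ^+ (\sum_(i < m) (rb i + sb i))%N *
    \det (\matrix_(i < m, j < m)
          Cz (2 * k'.+1 + 2 * m - 1) D (- (2 * n)%N%:Z) (2 * rb i - 2) (2 * sb j - 2)).
Proof.
move=> hr1 hs1 hrinc hsinc hrb1 hsb1 hrbinc hsbinc hrr hss hD.
set K := (2 * k'.+1 + 2 * m - 1)%N.
pose L := (k' + m)%N.
have hKL : K.+1 = (2 * L.+1)%N by rewrite /K /L; lia.
have hAu := @A_unit K L hKL.
have hrL : forall i, (1 <= r i)%N /\ (r i - 1 < L.+1)%N.
  by move=> i; case/andP: (hr1 i); rewrite /L; lia.
have hsL : forall i, (1 <= s i)%N /\ (s i - 1 < L.+1)%N.
  by move=> i; case/andP: (hs1 i); rewrite /L; lia.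
have hrbL : forall i, (1 <= rb i)%N /\ (rb i - 1 < L.+1)%N.
  by move=> i; case/andP: (hrb1 i); rewrite /L; lia.
have hsbL : forall i, (1 <= sb i)%N /\ (sb i - 1 < L.+1)%N.
  by move=> i; case/andP: (hsb1 i); rewrite /L; lia.
have [sg [hls hrs hsgl hsgr]] := @mk_shuffle k' m r rb hrL hrbL hrinc hrbinc hrr.
have [tg [hlt hrt htgl htgr]] := @mk_shuffle k' m s sb hsL hsbL hsinc hsbinc hss.
pose M := Mmx L.+1.
pose X := M ^+ n.
pose W := invmx M ^+ n.
have hXW : X *m W = 1%:M := @mulXV _ M (invmx M) n (mulmxV (M_unit L)).
have J := @jacobi _ k'.+1 m X W sg tg hXW.
have hWs : W^T = W by rewrite /W trmxX trmx_inv Mmx_sym.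
have eL : \matrix_(i < k'.+1, j < k'.+1) Cz K D (2 * n)%N%:Z (2 * r i - 2) (2 * s j - 2)
    = \matrix_(i, j) X (sg (lshift m i)) (tg (lshift m j)).
  apply/matrixP => i j; rewrite !mxE.
  have [h1 h2] := hrL i; have [h3 h4] := hsL j.
  have ha : (2 * r i - 2 < K.+1)%N by rewrite hKL; lia.
  have hb : (2 * s j - 2 < K.+1)%N by rewrite hKL; lia.
  rewrite /Cz (Cpos_nat _ _ _ _ ha hb).
  rewrite (_ : (2 * r i - 2 = 2 * (r i - 1))%N); last by lia.
  rewrite (_ : (2 * s j - 2 = 2 * (s j - 1))%N); last by lia.
  rewrite (@Aeven K L hKL n) //.
  have -> : sg (lshift m i) = inord (r i - 1) by apply: val_inj; rewrite /= hsgl inordK.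
  by have -> : tg (lshift m j) = inord (s j - 1) by apply: val_inj; rewrite /= htgl inordK.
have eR : \matrix_(i < m, j < m) Cz K D (- (2 * n)%N%:Z) (2 * rb i - 2) (2 * sb j - 2)
    = (\matrix_(i, j) W (tg (rshift k'.+1 i)) (sg (rshift k'.+1 j)))^T.
  apply/matrixP => i j; rewrite !mxE.
  have [h1 h2] := hrbL i; have [h3 h4] := hsbL j.
  have ha : (2 * rb i - 2 < K.+1)%N by rewrite hKL; lia.
  have hb : (2 * sb j - 2 < K.+1)%N by rewrite hKL; lia.
  rewrite (@negCz K hAu D hD n _ _ ha hb).
  rewrite (_ : (2 * rb i - 2 = 2 * (rb i - 1))%N); last by lia.
  rewrite (_ : (2 * sb j - 2 = 2 * (sb j - 1))%N); last by lia.
  rewrite (@Yeven K L hKL n) //.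
  rewrite -[W in RHS]hWs mxE.
  have -> : sg (rshift k'.+1 i) = inord (rb i - 1) by apply: val_inj; rewrite /= hsgr inordK.
  by have -> : tg (rshift k'.+1 j) = inord (sb j - 1) by apply: val_inj; rewrite /= htgr inordK.
rewrite eL eR det_tr J.
have hdetX : \det X = 1 by rewrite /X detX det_Mmx expr1n.
rewrite hdetX mulr1; congr (_ * _).
rewrite -signr_addb (@sign_pair k'.+1 m sg tg hls hlt hrs hrt) signr_odd.
have -> : (\sum_(j < m) (rb j + sb j) =
    \sum_(j < m) (sg (rshift k'.+1 j) + tg (rshift k'.+1 j)) + 2 * m)%N.
  rewrite (eq_bigr (fun j : 'I_m => (sg (rshift k'.+1 j) + tg (rshift k'.+1 j)) + 2)%N); last first.
    by move=> j _; rewrite hsgr htgr; have := hrbL j; have := hsbL j; lia.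
  by rewrite big_split /= sum_nat_const card_ord mulnC.
by rewrite -[in RHS]signr_odd oddD oddM andFb addbF signr_odd.
Qed.

Theorem theorem21 (n k m : nat) (hk : (1 <= k)%N) (hm : (1 <= m)%N)
  (r s : 'I_k -> nat) (rb sb : 'I_m -> nat)
  (D : nat -> nat -> nat -> rat) :
  (forall i : 'I_k, (1 <= r i <= k + m)%N) ->
  (forall i : 'I_k, (1 <= s i <= k + m)%N) ->
  (forall i j : 'I_k, (i < j)%N -> (r i < r j)%N) ->
  (forall i j : 'I_k, (i < j)%N -> (s i < s j)%N) ->
  (forall i : 'I_m, (1 <= rb i <= k + m)%N) ->
  (forall i : 'I_m, (1 <= sb i <= k + m)%N) ->
  (forall i j : 'I_m, (i < j)%N -> (rb i < rb j)%N) ->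
  (forall i j : 'I_m, (i < j)%N -> (sb i < sb j)%N) ->
  (forall (i : 'I_m) (j : 'I_k), rb i != r j) ->
  (forall (i : 'I_m) (j : 'I_k), sb i != s j) ->
  (forall a b : nat, neg_ext (2 * k + 2 * m - 1) a b (D a b)) ->
  \det (\matrix_(i < k, j < k)
          Cz (2 * k + 2 * m - 1) D (2 * n)%N%:Z (2 * r i - 2) (2 * s j - 2))
  = (-1) ^+ (\sum_(i < m) (rb i + sb i))%N *
    \det (\matrix_(i < m, j < m)
          Cz (2 * k + 2 * m - 1) D (- (2 * n)%N%:Z) (2 * rb i - 2) (2 * sb j - 2)).
Proof.
case: k hk r s => [//|k'] hk r s.
exact: main_thm.
Qed.
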